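(* Let $G$ be a finitely generated torsion-free nilpotent group. If for some prime $p$ the group $G$ is conjugacy $\mathcal{F}_p$-separable, then $G$ is abelian.
   Context: $\mathcal{F}_p$ denotes the class of all finite $p$-groups. A group $G$ is conjugacy $\mathcal{F}_p$-separable if whenever $a,b\in G$ are not conjugate in $G$, there is a homomorphism $\varphi$ of $G$ onto a finite $p$-group $X$ such that $a\varphi$ and $b\varphi$ are not conjugate in $X$. *)

(* Defs.v *)
From Stdlib Require Lists.List.
From mathcomp Require Import all_boot all_fingroup all_solvable.
Set Implicit Arguments. Unset Strict Implicit. Unset Printing Implicit Defensive.

Record grp := Grp {
  gcar :> Type;
  gmul : gcar -> gcar -> gcar;
  ginv : gcar -> gcar;
  gone : gcar;
  gmulA : forall x y z, gmul x (gmul y z) = gmul (gmul x y) z;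
  gmul1 : forall x, gmul gone x = x;
  gmulV : forall x, gmul (ginv x) x = gone
}.

Section Defs.
Variable G : grp.

Fixpoint gexp (x : G) (n : nat) : G :=
  match n with 0 => gone G | n'.+1 => gmul x (gexp x n') end.

Definition torsion_free : Prop :=
  forall (x : G) (n : nat), 0 < n -> gexp x n = gone G -> x = gone G.

Inductive gen_by (S : seq G) : G -> Prop :=
  | gen_base x : Stdlib.Lists.List.In x S -> gen_by S x
  | gen_one : gen_by S (gone G)
  | gen_mul x y : gen_by S x -> gen_by S y -> gen_by S (gmul x y)
  | gen_inv x : gen_by S x -> gen_by S (ginv x).

Definition finitely_generated : Prop :=
  exists S : seq G, forall x, gen_by S x.

Definition gcomm (x y : G) : G := gmul (gmul (ginv x) (ginv y)) (gmul x y).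

Fixpoint upper_central (n : nat) : G -> Prop :=
  match n with
  | 0 => fun x => x = gone G
  | n'.+1 => fun x => forall y, upper_central n' (gcomm x y)
  end.

Definition gnilpotent : Prop := exists n, forall x, upper_central n x.

Definition gabelian : Prop := forall x y : G, gmul x y = gmul y x.

Definition gconjugate (a b : G) : Prop :=
  exists g : G, gmul (gmul (ginv g) a) g = b.

Definition is_hom (gT : finGroupType) (f : G -> gT) : Prop :=
  forall x y, f (gmul x y) = (f x * f y)%g.

Definition conj_Fp_separable (p : nat) : Prop :=
  forall a b : G, ~ gconjugate a b ->
    exists (gT : finGroupType) (f : G -> gT),
      [/\ is_hom f, (forall y : gT, exists x, f x = y),
          pgroup p [set: gT] & ~ (exists y : gT, ((f a) ^ y)%g = f b)].

End Defs.

(* Main.v *)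
Set Warnings "-notation-overridden,-ambiguous-paths".
Require Import Defs.
From mathcomp Require Import all_boot all_fingroup all_solvable.
From mathcomp Require Import all_algebra zify.
From Stdlib Require Import Classical IndefiniteDescription.
Set Implicit Arguments. Unset Strict Implicit. Unset Printing Implicit Defensive.

Section GL.
Variable G : grp.
Local Notation "x ** y" := (gmul x y) (at level 40, left associativity).
Local Notation "1" := (gone G).
Local Notation inv := (@ginv G).
Implicit Types (x y z a b g : G).

Lemma mulgV' (x : G) : x ** inv x = 1.
Proof.
rewrite -[x ** _]gmul1 -{1}(gmulV (inv x)) -gmulA (gmulA (inv x) x).
by rewrite gmulV gmul1 gmulV.
Qed.

Lemma mulg1' (x : G) : x ** 1 = x.
Proof. by rewrite -(gmulV x) gmulA mulgV' gmul1. Qed.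

Lemma mulKg' (x y : G) : inv x ** (x ** y) = y.
Proof. by rewrite gmulA gmulV gmul1. Qed.

Lemma mulVKg' (x y : G) : x ** (inv x ** y) = y.
Proof. by rewrite gmulA mulgV' gmul1. Qed.

Lemma mulgK' (x y : G) : y ** x ** inv x = y.
Proof. by rewrite -gmulA mulgV' mulg1'. Qed.

Lemma mulgKV' (x y : G) : y ** inv x ** x = y.
Proof. by rewrite -gmulA gmulV mulg1'. Qed.

Lemma mulgI' (x y z : G) : x ** y = x ** z -> y = z.
Proof. by move=> e; rewrite -(mulKg' x y) e mulKg'. Qed.

Lemma mulIg' (x y z : G) : y ** x = z ** x -> y = z.
Proof. by move=> e; rewrite -(mulgK' x y) e mulgK'. Qed.

Lemma invg_uniq (x y : G) : x ** y = 1 -> y = inv x.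
Proof. by move=> e; apply: (@mulgI' x); rewrite e mulgV'. Qed.

Lemma invgK' (x : G) : inv (inv x) = x.
Proof. by apply: esym; apply: invg_uniq; rewrite gmulV. Qed.

Lemma invMg' (x y : G) : inv (x ** y) = inv y ** inv x.
Proof.
by apply: esym; apply: invg_uniq; rewrite -gmulA (gmulA y) mulgV' gmul1 mulgV'.
Qed.

Lemma invg1' : inv 1 = 1.
Proof. by apply: esym; apply: invg_uniq; rewrite gmul1. Qed.

Definition cent (z : G) := forall g, z ** g = g ** z.

Lemma comm1P (a b : G) : gcomm a b = 1 <-> a ** b = b ** a.
Proof.
rewrite /gcomm; split=> e.
  by have := invg_uniq e; rewrite invMg' !invgK'.
by rewrite e -gmulA mulKg' gmulV.
Qed.

Lemma cent1 : cent 1. Proof. by move=> g; rewrite gmul1 mulg1'. Qed.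
Lemma centM a b : cent a -> cent b -> cent (a ** b).
Proof. by move=> ca cb g; rewrite -gmulA cb gmulA ca gmulA. Qed.
Lemma centV a : cent a -> cent (inv a).
Proof.
by move=> ca g; apply: (@mulgI' a); rewrite mulVKg' gmulA ca mulgK'.
Qed.

Lemma gexpS x n : gexp x n.+1 = x ** gexp x n. Proof. by []. Qed.

Lemma gexpD x m n : gexp x (m + n) = gexp x m ** gexp x n.
Proof. by elim: m => [|m IH] /=; rewrite ?gmul1 // IH gmulA. Qed.

Lemma gexpSr x n : gexp x n.+1 = gexp x n ** x.
Proof. by rewrite -addn1 gexpD /= mulg1'. Qed.

Lemma gexp_comm x m n : gexp x m ** gexp x n = gexp x n ** gexp x m.
Proof. by rewrite -!gexpD addnC. Qed.

Lemma gexpM x m n : gexp x (m * n) = gexp (gexp x m) n.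
Proof. by elim: n => [|n IH]; rewrite ?muln0 // mulnS gexpD IH. Qed.

Lemma gexp1 n : gexp 1 n = 1.
Proof. by elim: n => //= n ->; rewrite gmul1. Qed.

Lemma centX a n : cent a -> cent (gexp a n).
Proof. move=> ca; elim: n => [|n IH] /=; [exact: cent1| exact: centM]. Qed.

Lemma gexpMc a b n : cent a -> gexp (b ** a) n = gexp b n ** gexp a n.
Proof.
move=> ca; elim: n => [|n IH] /=; first by rewrite gmul1.
rewrite IH -!gmulA; congr (b ** _); rewrite !gmulA; congr (_ ** _).
by rewrite ca.
Qed.

Lemma conjX g x n : inv g ** gexp x n ** g = gexp (inv g ** x ** g) n.
Proof.
elim: n => [|n IH] /=; first by rewrite mulg1' gmulV.
by rewrite -IH !gmulA mulgK'.
Qed.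

Definition zpow (x : G) (k : int) : G :=
  match k with Posz n => gexp x n | Negz n => inv (gexp x n.+1) end.


Lemma zpowS x k : zpow x (k + 1) = zpow x k ** x.
Proof.
case: k => [m|[|m]].
- have -> : (Posz m + 1 = Posz m.+1)%R by lia.
  by rewrite /= -gexpSr.
- have -> : (Negz 0 + 1 = Posz 0)%R by lia.
  by rewrite /= mulg1' gmulV.
- have -> : (Negz m.+1 + 1 = Negz m)%R by lia.
  by rewrite /= [in RHS]invMg' mulgKV'.
Qed.

Lemma zpowSV x k : zpow x (k - 1) = zpow x k ** inv x.
Proof.
have := zpowS x (k - 1); have -> : (k - 1 + 1 = k)%R by lia.
by move=> ->; rewrite mulgK'.
Qed.

Lemma zpowD x (a b : int) : zpow x (a + b) = zpow x a ** zpow x b.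
Proof.
case: b => [m|m].
  elim: m => [|m IH]; first by rewrite GRing.addr0 /= mulg1'.
  have -> : (a + Posz m.+1 = (a + Posz m) + 1)%R by lia.
  have -> : (Posz m.+1 = Posz m + 1)%R by lia.
  by rewrite !zpowS IH gmulA.
elim: m => [|m IH].
  have -> : (a + Negz 0 = a - 1)%R by lia.
  by rewrite zpowSV /= mulg1'.
have -> : (a + Negz m.+1 = (a + Negz m) - 1)%R by lia.
have -> : (Negz m.+1 = Negz m - 1)%R by lia.
by rewrite !zpowSV IH gmulA.
Qed.

Lemma zpowN x (a : int) : zpow x (- a) = inv (zpow x a).
Proof.
apply: invg_uniq; rewrite -zpowD.
by have -> : (a + - a = 0)%R by lia.
Qed.

Lemma zpow1 k : zpow 1 k = 1.
Proof. by case: k => m; rewrite /zpow gexp1 ?invg1'. Qed.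

Lemma centZ a k : cent a -> cent (zpow a k).
Proof.
move=> ca; case: k => m; rewrite /zpow; first exact: centX.
apply: centV; exact: centX.
Qed.

Section Ev.
Variable n : nat.
Variable c : 'I_n -> G.
Hypothesis hc : forall i, cent (c i).

Definition evs (s : seq 'I_n) (v : 'I_n -> int) : G :=
  foldr (fun i acc => zpow (c i) (v i) ** acc) 1 s.

Lemma evs_cent s v : cent (evs s v).
Proof.
elim: s => [|i s IH] /=; first exact: cent1.
apply: centM => //; exact: centZ.
Qed.

Lemma evs_eq s u v : (forall i, u i = v i) -> evs s u = evs s v.
Proof. by move=> e; elim: s => [|i s IH] //=; rewrite IH e. Qed.

Lemma evsD s u v : evs s (fun i => u i + v i)%R = evs s u ** evs s v.
Proof.
elim: s => [|i s IH] /=; first by rewrite gmul1.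
rewrite IH zpowD -!gmulA; congr (_ ** _); rewrite !gmulA; congr (_ ** _).
by rewrite (centZ (v i) (hc i)).
Qed.

Lemma evs_single s i k v : (forall j, v j = if j == i then k else 0%R) -> uniq s ->
  evs s v = if i \in s then zpow (c i) k else 1.
Proof.
move=> hv; elim: s => [|j s IH] //= /andP[js us]; rewrite IH // in_cons hv.
case: (eqVneq j i) => [eji|ne].
  by rewrite -eji (negbTE js) mulg1'.
by rewrite /= gmul1.
Qed.

Lemma evs_one s v : (forall i, c i = 1) -> evs s v = 1.
Proof. by move=> h; elim: s => [|i s IH] //=; rewrite IH h zpow1 gmul1. Qed.

Definition ev (v : 'rV[int]_n) : G := evs (enum 'I_n) (fun i => v ord0 i).

Lemma evD u v : ev (u + v) = ev u ** ev v.
Proof. by rewrite /ev -evsD; apply: evs_eq => i; rewrite mxE. Qed.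

Lemma ev0 : ev 0 = 1.
Proof.
rewrite /ev (@evs_eq _ _ (fun _ => 0%R)); last by move=> i; rewrite mxE.
by elim: (enum 'I_n) => //= i s ->; rewrite gmul1.
Qed.

Lemma evN u : ev (- u) = inv (ev u).
Proof. by apply: invg_uniq; rewrite -evD GRing.subrr ev0. Qed.

Lemma evMn u m : ev (u *+ m) = gexp (ev u) m.
Proof. by elim: m => [|m IH]; rewrite ?GRing.mulr0n ?ev0 // GRing.mulrS evD IH. Qed.

Lemma evZnat u m : ev ((Posz m) *: u) = gexp (ev u) m.
Proof. by rewrite -natz GRing.scaler_nat evMn. Qed.

Lemma ev_single (v : 'rV[int]_n) i (k : int) : (forall j, v ord0 j = if j == i then k else 0%R) ->
  ev v = zpow (c i) k.
Proof. by move=> h; rewrite /ev (evs_single (i:=i) (k:=k)) ?enum_uniq ?mem_enum. Qed.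

Lemma ev_scale (z : int) u : ev u = 1 -> ev (z *: u) = 1.
Proof.
move=> e; case: z => m; first by rewrite evZnat e gexp1.
by rewrite NegzE GRing.scaleNr evN evZnat e gexp1 invg1'.
Qed.

Lemma ev_sum (I : Type) (r : seq I) (P : pred I) (F : I -> 'rV[int]_n) :
  (forall i, P i -> ev (F i) = 1) -> ev (\sum_(i <- r | P i) F i)%R = 1.
Proof.
move=> h; apply: (big_ind (fun v => ev v = 1)) => //; first exact: ev0.
by move=> u v eu ev'; rewrite evD eu ev' gmul1.
Qed.

End Ev.

Section Z2.
Variable x : G.
Hypothesis hx : forall y, cent (gcomm x y).

Lemma conj_comm g : inv g ** x ** g = x ** gcomm x g.
Proof. by rewrite /gcomm !gmulA mulgV' gmul1. Qed.

Lemma commM g h : gcomm x (g ** h) = gcomm x g ** gcomm x h.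
Proof.
apply: (@mulgI' x); rewrite -conj_comm.
have -> : inv (g ** h) ** x ** (g ** h) = inv h ** (inv g ** x ** g) ** h.
  by rewrite invMg' !gmulA.
rewrite conj_comm gmulA -(gmulA _ (gcomm x g) h) (hx g h) gmulA conj_comm.
by rewrite (hx g (gcomm x h)) gmulA.
Qed.

Lemma commg1 : gcomm x 1 = 1.
Proof. by apply: (@mulgI' x); rewrite -conj_comm invg1' gmul1 !mulg1'. Qed.

Lemma commV g : gcomm x (inv g) = inv (gcomm x g).
Proof. by apply: invg_uniq; rewrite -commM mulgV' commg1. Qed.

Lemma commX g m : gcomm x (gexp g m) = gexp (gcomm x g) m.
Proof. by elim: m => [|m IH] /=; rewrite ?commg1 // commM IH. Qed.

Lemma conjXc g m : inv g ** gexp x m ** g = gexp x m ** gexp (gcomm x g) m.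
Proof. by rewrite conjX conj_comm gexpMc. Qed.

Lemma hom1 (gT : finGroupType) (f : G -> gT) : is_hom f -> f 1 = 1%g.
Proof.
move=> hf; apply: (@mulgI _ (f 1)); rewrite -hf gmul1 mulg1 //.
Qed.

Lemma homV (gT : finGroupType) (f : G -> gT) g : is_hom f -> f (inv g) = ((f g)^-1)%g.
Proof.
move=> hf; apply: (@mulIg _ (f g)); rewrite -hf gmulV (hom1 hf) mulVg //.
Qed.

Lemma homX (gT : finGroupType) (f : G -> gT) g m : is_hom f -> f (gexp g m) = ((f g) ^+ m)%g.
Proof.
move=> hf; elim: m => [|m IH] /=; first exact: hom1.
by rewrite hf IH expgS.
Qed.

Lemma pquot_conj (q : nat) (gT : finGroupType) (f : G -> gT) : is_hom f ->
  coprime q #|gT| -> forall g, exists w : gT, ((f (gexp x q)) ^ w)%g = f (gexp x q ** gcomm x g).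
Proof.
move=> hf cq g; set N := #|gT|; set t := totient N.
have Npos : 0 < N by apply/card_gt0P; exists 1%g.
have tpos : 0 < t by rewrite totient_gt0.
set m := q ^ t.-1.
exists (f (gexp g m)); rewrite conjgE -(homV _ hf) -!hf gmulA conjXc commX -gexpM.
have -> : m * q = q ^ t by rewrite /m -expnSr prednK.
rewrite hf [in RHS]hf; congr (_ * _)%g; rewrite (homX _ _ hf).
have hN : ((f (gcomm x g)) ^+ N)%g = 1%g.
  by rewrite /N -cardsT; apply: expg_cardG; rewrite inE.
by rewrite -(expg_mod _ hN) Euler_exp_totient // (expg_mod 1 hN) expg1.
Qed.

End Z2.

Lemma find_Z2 k : forall u : G, upper_central k u -> ~ upper_central 1 u ->
  exists w : G, upper_central 2 w /\ ~ upper_central 1 w.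
Proof.
elim: k => [|k IH] u hu n1.
  exfalso; apply: n1 => y /=; rewrite hu /gcomm invg1' !gmul1 gmulV //.
case: (classic (upper_central 2 u)) => [h2|h2]; first by exists u.
have [y hy] : exists y, ~ upper_central 1 (gcomm u y).
  apply: NNPP => H; apply: h2 => y; apply: NNPP => H'; apply: H; exists y; exact: H'.
exact: IH (hu y) hy.
Qed.

Lemma In_nth' (S : seq G) s : List.In s S -> exists i, i < size S /\ nth 1 S i = s.
Proof.
elim: S => [|a S IH] //= [->|h]; first by exists 0.
by have [i [lt e]] := IH h; exists i.+1.
Qed.

End GL.

Theorem proposition3 (G : grp) :
  finitely_generated G -> torsion_free G -> gnilpotent G ->
  (exists p : nat, prime p /\ conj_Fp_separable G p) ->
  gabelian G.
Proof.
move=> [S hS] tf [N hN] [p [pp sep]].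
apply: NNPP => nab.
have [a [b hab]] : exists a b : G, gmul a b <> gmul b a.
  apply: NNPP => H; apply: nab => a b; apply: NNPP => H'; apply: H; exists a, b; exact: H'.
have na1 : ~ upper_central 1 a.
  by move=> h; apply: hab; apply/comm1P; exact: h b.
have [x [x2 x1]] := find_Z2 (hN a) na1.
have hx : forall y, cent (gcomm x y).
  by move=> y g; apply/comm1P; exact: x2 y g.
set q := p.+1.
set n := size S.
pose c := fun i : 'I_n => gcomm x (nth (gone G) S i).
have hc : forall i, cent (c i) by move=> i; exact: hx.
have inC : forall g, exists v, gcomm x g = ev c v.
  move=> g; elim: (hS g) => {g}.
  - move=> s /In_nth' [i [ilt e]].
    exists (\row_j (if j == Ordinal ilt then 1 else 0))%R.
    rewrite (ev_single c (i := Ordinal ilt) (k := 1%R)); last by move=> j; rewrite mxE.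
    by rewrite /c /= e mulg1'.
  - by exists 0%R; rewrite (ev0 c) (commg1 x).
  - move=> g h _ [v ev] _ [w ew]; exists (v + w)%R.
    by rewrite (evD hc) (commM hx) ev ew.
  - move=> g _ [v ev]; exists (- v)%R.
    by rewrite (evN hc) (commV hx) ev.
have div : forall g, exists h, gexp (gcomm x h) q = gcomm x g.
  move=> g; apply: NNPP => H.
  have nconj : ~ gconjugate (gexp x q) (gmul (gexp x q) (gcomm x g)).
    move=> [h e]; apply: H; exists h; rewrite (conjXc hx) in e; exact: mulgI' e.
  have [gT [f [hf fsurj pg nc]]] := sep _ _ nconj.
  apply: nc; apply: (pquot_conj hx hf _ g).
  have [k ek] := p_natP pg; rewrite -cardsT ek.
  by apply: coprimeXr; exact: coprimeSn.
have hdiv : forall i, exists a, gexp (ev c a) q = c i.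
  move=> i; have [h eh] := div (nth (gone G) S i); have [a' ea] := inC h.
  by exists a'; rewrite -ea eh.
pose af := fun i => proj1_sig (constructive_indefinite_description _ (hdiv i)).
have haf : forall i, gexp (ev c (af i)) q = c i.
  by move=> i; exact: (proj2_sig (constructive_indefinite_description _ (hdiv i))).
pose M : 'M[int]_n := (\matrix_(i, j) ((i == j)%:R - q%:R * af i ord0 j))%R.
have rowK : forall k, ev c (row k M) = gone G.
  move=> k; have -> : row k M = (\row_j ((j == k)%:R : int) - (Posz q) *: af k)%R.
    by apply/rowP => j; rewrite !mxE eq_sym natz.
  rewrite (evD hc) (evN hc) (evZnat hc) haf.
  rewrite (ev_single c (i := k) (k := 1%R)); last by move=> j; rewrite mxE; case: (j == k).
  by rewrite /= mulg1' mulgV'.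
have cdet : forall i, zpow (c i) ((\det M)%R) = gone G.
  move=> i.
  have : ev c (row i (\adj M)%R *m M)%R = gone G.
    rewrite mulmx_sum_row; apply: (ev_sum hc) => k _; apply: (ev_scale hc); exact: rowK.
  rewrite -row_mul mul_adj_mx (ev_single c (i := i) (k := (\det M)%R)) //.
  by move=> j; rewrite !mxE eq_sym; case: (j == i); rewrite ?GRing.mulr1n ?GRing.mulr0n.
have detnz : (\det M)%R != 0%R.
  have q1 : 1 < q by rewrite /q ltnS prime_gt0.
  pose f : {rmorphism int -> 'Z_q} := intr.
  have : (\det (map_mx f M))%R = 1%R.
    have -> : map_mx f M = 1%:M%R.
      apply/matrixP => i j; rewrite !mxE GRing.rmorphB GRing.rmorphM /= GRing.rmorph_nat.
      by rewrite natz -[((Posz q)%:~R)%R]/(q%:R : 'Z_q)%R pchar_Zp // GRing.mul0r GRing.subr0.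
    by rewrite det1.
  rewrite det_map_mx => e; apply/eqP => d0; move: e; rewrite d0 GRing.rmorph0 => /eqP.
  by rewrite eq_sym GRing.oner_eq0.
have c1 : forall i, c i = gone G.
  move=> i; have := cdet i; case E: (\det M)%R => [m|m] /= e.
    apply: (tf _ m) => //; rewrite lt0n; apply/eqP => m0.
    by move: detnz; rewrite E m0.
  apply: (tf _ m.+1) => //.
  by have := f_equal (@ginv G) e; rewrite invgK' invg1'.
apply: x1 => g /=; have [v hv] := inC g.
by rewrite hv /ev (evs_one _ _ c1).
Qed.
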